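(* Let $\Gamma$ be a well-ordered set and let $f:[\Gamma]^2\to\{0,1\}$ be a partition of the first kind. Let $P_f:\ell_1(\Gamma)\to\mathbb{C}$ be the quadratic functional $P_f(x)=\sum_{\{i,j\}\in f^{-1}(1)}x_ix_j$. If $Y$ is a linear subspace of $\ell_1(\Gamma)$ with $Y\subset P_f^{-1}(0)$, then $Y$ is separable.
   Context: $\ell_1(\Gamma)$ is the complex Banach space of absolutely summable families $x=(x_\gamma)_{\gamma\in\Gamma}$. $[\Gamma]^2$ denotes the set of two-element subsets of $\Gamma$, and we write $f(\alpha,\beta)$ for $f(\{\alpha,\beta\})$. For a finite set $a\subset\Gamma$ of cardinality $n$ and $k<n$, $a(k)$ denotes the $(k+1)$-th element of $a$ in the well order of $\Gamma$, so $a=\{a(0),\dots,a(n-1)\}$. A function $f:[\Gamma]^2\to\{0,1\}$ is a partition of the first kind if for every $n<\omega$, every uncountable family $A$ of pairwise disjoint subsets of $\Gamma$ each of cardinality $n$, and every $k<n$, there exist $a,b,a',b'\in A$ with $a\neq b$, $a'\neq b'$, such that $f(a(k),b(k))=1$, $f(a'(k),b'(k))=0$, and $f(a(i),b(j))=f(a'(i),b'(j))$ for all $(i,j)\in n\times n$ with $(i,j)\neq(k,k)$. *)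

(* Defs.v *)
From HB Require Import structures.
From mathcomp Require Import all_boot all_order all_algebra.
From mathcomp Require Import finmap.
From mathcomp Require Import complex.
From mathcomp Require Import boolp classical_sets cardinality reals.
Set Implicit Arguments. Unset Strict Implicit. Unset Printing Implicit Defensive.
Import Order.TTheory GRing.Theory Num.Theory.
Local Open Scope ring_scope.
Local Open Scope classical_set_scope.

Definition cmod (R : realType) (z : R[i]) : R := ComplexField.Normc.normc z.

(* a(k): the (k+1)-th element of the finite set a in the (well) order of
   Gamma; x0 is a dummy default, irrelevant when k < #|a|. *)
Definition ith (d : Order.disp_t) (G : orderType d) (x0 : G) (a : {fset G})
  (k : nat) : G := nth x0 (sort <=%O (enum_fset a)) k.

(* A 2-colouring of [Gamma]^2 is encoded by a symmetric f : G -> G -> bool;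
   f x y (x <> y) is f({x,y}); values on the diagonal are never used. *)
Definition symmetric_colouring (d : Order.disp_t) (G : orderType d)
  (f : G -> G -> bool) : Prop := forall x y, f x y = f y x.

Definition partition_first_kind (d : Order.disp_t) (G : orderType d)
  (f : G -> G -> bool) : Prop :=
  forall (x0 : G) (n : nat) (A : set {fset G}) (k : nat),
    ~ countable A ->
    (forall a, A a -> #|` a|%fset = n) ->
    (forall a b, A a -> A b -> a <> b -> (a `&` b)%fset = fset0) ->
    (k < n)%N ->
    exists a b a' b',
      [/\ A a, A b, A a', A b' &
      [/\ a <> b, a' <> b',
          f (ith x0 a k) (ith x0 b k) = true,
          f (ith x0 a' k) (ith x0 b' k) = false &
          forall i j, (i < n)%N -> (j < n)%N -> (i, j) <> (k, k) ->
            f (ith x0 a i) (ith x0 b j) = f (ith x0 a' i) (ith x0 b' j)]].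

Definition in_l1 (R : realType) (T : choiceType) (x : T -> R[i]) : Prop :=
  exists M : R, forall F : {fset T}, \sum_(g <- F) cmod (x g) <= M.

Definition l1_dist_lt (R : realType) (T : choiceType) (x y : T -> R[i])
  (eps : R) : Prop :=
  exists2 M : R, M < eps &
    forall F : {fset T}, \sum_(g <- F) cmod (x g - y g) <= M.

Definition has_sum (R : realType) (I : choiceType) (u : I -> R[i]) (l : R[i])
  : Prop :=
  forall eps : R, 0 < eps -> exists F0 : {fset I}, forall F : {fset I},
    (F0 `<=` F)%fset -> cmod (\sum_(p <- F) u p - l) < eps.

(* two-element subsets {i,j} of G, represented as pairs (i,j) with i < j *)
Definition pairs2 (d : Order.disp_t) (G : orderType d) :=
  {p : G * G | (p.1 < p.2)%O}.

Definition Pf_eq (R : realType) (d : Order.disp_t) (G : orderType d)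
  (f : G -> G -> bool) (x : G -> R[i]) (l : R[i]) : Prop :=
  has_sum (fun p : pairs2 G =>
             if f (val p).1 (val p).2 then x (val p).1 * x (val p).2 else 0) l.

Definition l1_subspace (R : realType) (T : choiceType) (Y : set (T -> R[i]))
  : Prop :=
  [/\ (forall y, Y y -> in_l1 y),
      Y (fun _ => 0),
      (forall y z, Y y -> Y z -> Y (fun g => y g + z g)) &
      (forall (c : R[i]) y, Y y -> Y (fun g => c * y g))].

Definition l1_separable (R : realType) (T : choiceType) (Y : set (T -> R[i]))
  : Prop :=
  exists D : set (T -> R[i]),
    [/\ countable D, D `<=` Y &
        forall y, Y y -> forall eps : R, 0 < eps ->
          exists2 z, D z & l1_dist_lt y z eps].

(* Main.v *)
Require Import Defs.
From HB Require Import structures.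
From mathcomp Require Import all_boot all_order all_algebra.
From mathcomp Require Import finmap complex ring lra.
From mathcomp Require Import boolp classical_sets cardinality reals.
Import Order.TTheory GRing.Theory Num.Theory.
Local Open Scope ring_scope.
Local Open Scope classical_set_scope.
Section Cmod.
Variable R : realType.
Implicit Types z w : R[i].

Lemma cmodE z : (cmod z)%:C%C = `|z|.
Proof. by case: z => a b; rewrite normc_def. Qed.

Lemma cmod_ge0 z : 0 <= cmod z.
Proof. by rewrite -ler0c cmodE. Qed.

Lemma cmodD z w : cmod (z + w) <= cmod z + cmod w.
Proof. by rewrite -lecR rmorphD /= !cmodE ler_normD. Qed.

Lemma cmodM z w : cmod (z * w) = cmod z * cmod w.
Proof. by apply: (@complexI R); rewrite rmorphM /= !cmodE normrM. Qed.

Lemma cmodN z : cmod (- z) = cmod z.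
Proof. by apply: (@complexI R); rewrite !cmodE normrN. Qed.

Lemma cmodB z w : cmod (z - w) = cmod (w - z).
Proof. by rewrite -cmodN opprB. Qed.

Lemma cmod0 : cmod (0 : R[i]) = 0.
Proof. by apply: (@complexI R); rewrite !cmodE normr0. Qed.

Lemma cmod1 : cmod (1 : R[i]) = 1.
Proof. by apply: (@complexI R); rewrite !cmodE normr1. Qed.

Lemma cmod_eq0 z : (cmod z == 0) = (z == 0).
Proof. by rewrite -(inj_eq (@complexI R)) cmodE normr_eq0. Qed.

Lemma cmod_reim z : cmod z <= `|complex.Re z| + `|complex.Im z|.
Proof.
case: z => a b; rewrite /cmod /=.
have h : 0 <= `|a| + `|b| by rewrite addr_ge0.
rewrite -[X in _ <= X](ger0_norm h) -sqrtr_sqr ler_wsqrtr //.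
rewrite sqrrD (real_normK (num_real a)) (real_normK (num_real b)).
have := mulr_ge0 (normr_ge0 a) (normr_ge0 b); lra.
Qed.

Lemma cmodBB z w : cmod (z - w) <= cmod z + cmod w.
Proof. by apply: (le_trans (cmodD _ _)); rewrite cmodN. Qed.

End Cmod.
Arguments cmodE {R}. Arguments cmod_ge0 {R}. Arguments cmodD {R}. Arguments cmodM {R}.
Arguments cmodN {R}. Arguments cmodB {R}. Arguments cmod0 {R}. Arguments cmod1 {R}.
Arguments cmod_eq0 {R}. Arguments cmod_reim {R}. Arguments cmodBB {R}.
Section Count.

Lemma sub_countable' {I : Type} (A B : set I) : A `<=` B -> countable B -> countable A.
Proof. by move=> AB; apply: sub_countable; apply: subset_card_le. Qed.

Lemma countableU' {I : Type} (A B : set I) : countable A -> countable B -> countable (A `|` B).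
Proof.
move=> cA cB.
have -> : A `|` B = \bigcup_(b in [set: bool]) (if b then A else B).
  apply/seteqP; split=> x.
    by case=> h; [exists true | exists false].
  by case=> -[] _ h; [left | right].
by apply: bigcup_countable => // -[].
Qed.

Lemma pigeon {I : Type} (K : countType) (D : set I) (P : K -> I -> Prop) :
  ~ countable D -> (forall i, D i -> exists k, P k i) ->
  exists k, ~ countable (D `&` P k).
Proof.
move=> nD hP; apply: contrapT => hn.
have hc : forall k, countable (D `&` P k).
  by move=> k; apply: contrapT => h; apply: hn; exists k.
apply: nD; apply: (@sub_countable' _ _ (\bigcup_(k in [set: K]) (D `&` P k))).
  by move=> i Di; have [k Pk] := hP i Di; exists k.
by apply: bigcup_countable.
Qed.

Lemma uncount_setD {I : Type} {D C : set I} :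
  ~ countable D -> countable C -> ~ countable (D `\` C).
Proof.
move=> nD cC cDC; apply: nD; apply: (@sub_countable' _ _ ((D `\` C) `|` C)).
  by move=> x Dx; have [Cx|nCx] := pselect (C x); [right | left].
exact: countableU'.
Qed.

Lemma uncount_other {I : Type} {D : set I} (i : I) :
  ~ countable D -> exists j, D j /\ j <> i.
Proof.
move=> nD; apply: contrapT => h; apply: nD.
apply: (@sub_countable' _ _ ([set i])); last exact: countable1.
move=> j Dj /=; apply: contrapT => ji; apply: h; by exists j.
Qed.

Lemma uncount_ex {I : Type} {D : set I} : ~ countable D -> exists j, D j.
Proof.
move=> nD; apply: contrapT => h; apply: nD.
have -> : D = set0 by apply/seteqP; split=> x // Dx; apply: h; exists x.
exact: countable0.
Qed.

End Count.
Section Delta.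

Lemma delta_system {I : Type} (T : choiceType) n : forall (F : I -> {fset T}) (D : set I),
  ~ countable D -> (forall i, D i -> #|` F i| = n) ->
  exists J r, [/\ J `<=` D, ~ countable J &
    forall i j, J i -> J j -> i <> j -> (F i `&` F j)%fset = r].
Proof.
elim: n => [|n IH] F D nD hs.
  exists D, fset0; split=> // i j Di Dj _.
  by rewrite (cardfs0_eq (hs i Di)) fset0I.
have [[x hx]|hnx] := pselect (exists x, ~ countable (D `&` [set i | x \in F i])).
  have hs' : forall i, (D `&` [set i | x \in F i]) i -> #|` (F i `\ x)%fset| = n.
    move=> i [Di xi]; have := hs i Di; rewrite (cardfsD1 x) xi.
    by rewrite add1n => -[].
  have [J [r [JD nJ hJ]]] := IH (fun i => (F i `\ x)%fset) _ hx hs'.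
  exists J, (x |` r)%fset; split=> //; first by move=> i /JD [].
  move=> i j Ji Jj ij; rewrite -(hJ i j Ji Jj ij).
  have [_ xi] := JD i Ji; have [_ xj] := JD j Jj.
  apply/fsetP=> y; rewrite !(in_fsetI, in_fset1U, in_fsetD1).
  case: (eqVneq y x) => [->|] //=; by rewrite xi xj.
have hc : forall x, countable (D `&` [set i | x \in F i]).
  by move=> x; apply: contrapT => h; apply: hnx; exists x.
have [E [ED tE mE]] := ex_maximal_disjoint_subcollection (fun i => [set` F i]) D.
have nE : ~ countable E.
  move=> cE.
  pose U := \bigcup_(i in E) [set` F i].
  have cU : countable U by apply: bigcup_countable => // i _; exact: countable_fset.
  pose C := \bigcup_(x in U) (D `&` [set i | x \in F i]).
  have cC : countable C by apply: bigcup_countable.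
  have [i0 [Di0 nCi0]] := uncount_ex (uncount_setD nD cC).
  have ne : forall i, D i -> exists x, x \in F i.
    move=> i Di; apply/fset0Pn; rewrite -cardfs_gt0 hs //.
  have i0E : ~ E i0.
    move=> Ei0; have [x xF] := ne i0 Di0; apply: nCi0.
    by exists x => //; exists i0.
  apply: (mE (E `|` [set i0])).
  - split; first by move=> i Ei; left.
    by move=> h; apply: i0E; apply: h; right.
  - by move=> i [/ED|->].
  - move=> i j [Ei|->] [Ej|->] [y [/= yi yj]] //.
    + by apply: tE => //; exists y.
    + exfalso; apply: nCi0; exists y; first by exists i.
      by split.
    + exfalso; apply: nCi0; exists y; first by exists j.
      by split.
exists E, fset0%fset; split=> // i j Ei Ej ij.
apply/eqP; apply: contraT => /fset0Pn [y].
rewrite in_fsetI => /andP [yi yj]; case: ij; apply: tE => //.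
by exists y.
Qed.

End Delta.
Section Grid.
Variable R : realType.

Definition qz (m : nat) (z : R[i]) : int * int :=
  (Num.floor (complex.Re z * m.+1%:R), Num.floor (complex.Im z * m.+1%:R)).

Lemma floor_close (x y : R) : Num.floor x = Num.floor y -> `|x - y| < 1.
Proof.
move=> e; have /andP [hx1 hx2] := floor_itv x; have /andP [hy1 hy2] := floor_itv y.
rewrite e in hx1 hx2; rewrite ltr_norml; apply/andP; split.
  move: hy2 hx1; rewrite intrD; lra.
move: hx2 hy1; rewrite intrD; lra.
Qed.

Lemma qz_close m z w : qz m z = qz m w -> cmod (z - w) <= 2 / m.+1%:R.
Proof.
case: z => a b; case: w => c e [h1 h2].
have hm : 0 < (m.+1%:R : R) by rewrite ltr0n.
have k1 := floor_close _ _ h1; have k2 := floor_close _ _ h2.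
rewrite -mulrBl normrM (gtr0_norm hm) -ltr_pdivlMr // in k1.
rewrite -mulrBl normrM (gtr0_norm hm) -ltr_pdivlMr // in k2.
have hr := @cmod_reim R ((a +i* b)%C - (c +i* e)%C); apply: (le_trans hr) => /=.
rewrite (_ : 2 / m.+1%:R = 1 / m.+1%:R + 1 / m.+1%:R); last by rewrite -mulrDl.
by apply: lerD; apply: ltW.
Qed.

End Grid.

Section Ith.
Variables (d : Order.disp_t) (G : orderType d).

Lemma ith_mem (x0 : G) (a : {fset G}) k : (k < #|` a|)%N -> ith x0 a k \in a.
Proof.
move=> hk; rewrite /ith.
have : nth x0 (sort <=%O (enum_fset a)) k \in sort <=%O (enum_fset a).
  by apply: mem_nth; rewrite size_sort.
by rewrite mem_sort.
Qed.

Lemma ith_ex (x0 : G) (a : {fset G}) x : x \in a ->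
  exists2 k, (k < #|` a|)%N & ith x0 a k = x.
Proof.
move=> xa; exists (index x (sort <=%O (enum_fset a))).
  by rewrite -(size_sort <=%O) index_mem mem_sort.
by rewrite /ith nth_index // mem_sort.
Qed.

End Ith.
Arguments qz {R}. Arguments qz_close {R}. Arguments floor_close {R}.
Arguments ith_mem {d G}. Arguments ith_ex {d G}.
Section Bil.
Variables (R : realType) (d : Order.disp_t) (G : orderType d) (f : G -> G -> bool).
Hypothesis fsym : symmetric_colouring f.

Definition BE (E : {fset G}) (y z : G -> R[i]) : R[i] :=
  \sum_(i <- E) \sum_(j <- E) (if (i != j) && f i j then y i * z j else 0).

Lemma cmod_sum (I : Type) (s : seq I) (P : pred I) (F : I -> R[i]) :
  cmod (\sum_(i <- s | P i) F i) <= \sum_(i <- s | P i) cmod (F i).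
Proof.
elim/big_rec2: _ => [|i x y _ hy]; first by rewrite cmod0.
by apply: (le_trans (cmodD _ _)); rewrite lerD2l.
Qed.

Lemma sum_ge0 (I : Type) (s : seq I) (P : pred I) (F : I -> R[i]) :
  0 <= \sum_(i <- s | P i) cmod (F i).
Proof. by apply: sumr_ge0 => i _; apply: cmod_ge0. Qed.

Lemma BE_le E u v :
  cmod (BE E u v) <= (\sum_(i <- E) cmod (u i)) * (\sum_(j <- E) cmod (v j)).
Proof.
apply: (le_trans (cmod_sum _ _ _ _)); rewrite big_distrl /=.
apply: ler_sum => i _; apply: (le_trans (cmod_sum _ _ _ _)); rewrite big_distrr /=.
apply: ler_sum => j _; case: ifP => _; last by rewrite cmod0 mulr_ge0 ?cmod_ge0.
by rewrite cmodM.
Qed.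

Lemma BE_diff E y z y' z' :
  BE E y z - BE E y' z' =
  BE E (fun g => y g - y' g) z + BE E y' (fun g => z g - z' g).
Proof.
rewrite /BE -sumrB -big_split /=; apply: eq_bigr => i _.
rewrite -sumrB -big_split /=; apply: eq_bigr => j _.
case: ifP => _; last by rewrite subr0 addr0.
ring.
Qed.

Lemma BE_pairs E y z : BE E y z =
  \sum_(i <- E) \sum_(j <- E | (i < j)%O)
     (if f i j then y i * z j + z i * y j else 0).
Proof.
rewrite /BE.
transitivity (\sum_(i <- E) \sum_(j <- E | (i < j)%O) (if f i j then y i * z j else 0)
  + \sum_(i <- E) \sum_(j <- E | (j < i)%O) (if f i j then y i * z j else 0)).
  rewrite -big_split /=; apply: eq_bigr => i _.
  rewrite (bigID (fun j => (i < j)%O)) /=; congr (_ + _).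
    by apply: eq_bigr => j ij; rewrite (lt_eqF ij) /=.
  rewrite big_mkcond [in RHS]big_mkcond; apply: eq_bigr => j _.
  by case: (ltgtP i j).
rewrite [X in _ + X](_ : _ = \sum_(i <- E) \sum_(j <- E | (i < j)%O)
    (if f i j then z i * y j else 0)).
  rewrite -big_split /=; apply: eq_bigr => i _.
  rewrite -big_split /=; apply: eq_bigr => j _.
  by case: ifP; rewrite ?addr0.
rewrite (eq_bigr (fun i => \sum_(j <- E) (if (j < i)%O then (if f i j then y i * z j else 0) else 0)));
  last by move=> i _; rewrite big_mkcond.
rewrite exchange_big /=; apply: eq_bigr => i _.
rewrite [RHS]big_mkcond; apply: eq_bigr => j _.
by rewrite fsym; case: ifP => //; case: ifP => // _ _; rewrite mulrC.
Qed.

End Bil.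
Arguments BE {R d G}. Arguments BE_pairs {R d G f}. Arguments BE_le {R d G}.
Arguments BE_diff {R d G}. Arguments cmod_sum {R}. Arguments sum_ge0 {R}.
Section PfBE.
Variables (R : realType) (d : Order.disp_t) (G : orderType d) (f : G -> G -> bool).
Hypothesis fsym : symmetric_colouring f.

Definition PF (E : {fset G}) : {fset pairs2 G} :=
  seq_fset tt (pmap insub [seq (i, j) | i <- E, j <- E]).

Lemma sum_pmap (s : seq (G * G)) (h : G * G -> R[i]) :
  \sum_(p <- (pmap insub s : seq (pairs2 G))) h (val p) =
  \sum_(x <- s | (x.1 < x.2)%O) h x.
Proof.
elim: s => [|x s IH]; first by rewrite !big_nil.
rewrite big_cons -IH /=; case: (@insubP _ _ (pairs2 G) x) => [u hu <-|hnu] /=.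
  by rewrite big_cons (valP u).
by rewrite (negbTE hnu).
Qed.

Lemma sum_PF E (h : G * G -> R[i]) :
  \sum_(p <- PF E) h (val p) = \sum_(i <- E) \sum_(j <- E | (i < j)%O) h (i, j).
Proof.
rewrite /PF (perm_big _ (seq_fset_perm _ _)) undup_id; last first.
  apply: pmap_sub_uniq; apply: allpairs_uniq => //.
  by move=> [a b] [c e] _ _ /= [-> ->].
rewrite sum_pmap big_mkcond big_allpairs; apply: eq_bigr => i _.
by rewrite [RHS]big_mkcond.
Qed.

Lemma mem_PF E (p : pairs2 G) : ((val p).1 \in E) -> ((val p).2 \in E) -> p \in PF E.
Proof.
move=> h1 h2; rewrite /PF seq_fsetE mem_pmap_sub.
by rewrite [val p]surjective_pairing; apply: allpairs_f.
Qed.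

Definition Uw (w : G -> R[i]) (x : G * G) : R[i] :=
  if f x.1 x.2 then w x.1 * w x.2 else 0.

Lemma BE_small (y z : G -> R[i]) :
  Pf_eq f y 0 -> Pf_eq f z 0 -> Pf_eq f (fun g => y g + z g) 0 ->
  forall eta : R, 0 < eta -> exists E0 : {fset G},
    forall E, (E0 `<=` E)%fset -> cmod (BE f E y z) < eta.
Proof.
move=> hy hz hyz eta he.
have he3 : 0 < eta / 3%:R by rewrite divr_gt0 // ltr0n.
have [F1 h1] := hy _ he3; have [F2 h2] := hz _ he3; have [F3 h3] := hyz _ he3.
pose Fa := (F1 `|` F2 `|` F3)%fset.
exists ([fset (val p).1 | p in Fa] `|` [fset (val p).2 | p in Fa])%fset => E hE.
have sub : forall F : {fset pairs2 G}, (F `<=` Fa)%fset -> (F `<=` PF E)%fset.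
  move=> F hF; apply/fsubsetP => p pF.
  have pFa : p \in Fa by apply: (fsubsetP hF).
  apply: mem_PF; apply: (fsubsetP hE); rewrite in_fsetU; apply/orP.
    by left; apply/imfsetP; exists p.
  by right; apply/imfsetP; exists p.
have s1 := h1 _ (sub _ (fsubset_trans (fsubsetUl F1 F2) (fsubsetUl _ F3))).
have s2 := h2 _ (sub _ (fsubset_trans (fsubsetUr F1 F2) (fsubsetUl _ F3))).
have s3 := h3 _ (sub _ (fsubsetUr _ F3)).
rewrite !subr0 in s1 s2 s3.
have eS : forall w : G -> R[i], \sum_(p <- PF E) (if f (val p).1 (val p).2 then w (val p).1 * w (val p).2 else 0)
   = \sum_(i <- E) \sum_(j <- E | (i < j)%O) (if f i j then w i * w j else 0).
  by move=> w; rewrite (sum_PF E (Uw w)).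
rewrite !eS in s1 s2; rewrite (eS (fun g => y g + z g)) in s3.
have -> : BE f E y z = (\sum_(i <- E) \sum_(j <- E | (i < j)%O) (if f i j then (y i + z i) * (y j + z j) else 0))
   - (\sum_(i <- E) \sum_(j <- E | (i < j)%O) (if f i j then y i * y j else 0))
   - (\sum_(i <- E) \sum_(j <- E | (i < j)%O) (if f i j then z i * z j else 0)).
  rewrite (BE_pairs fsym) -!sumrB; apply: eq_bigr => i _.
  rewrite -!sumrB; apply: eq_bigr => j _.
  case: ifP => _; last by rewrite !subr0.
  ring.
apply: (le_lt_trans (cmodD _ _)); rewrite cmodN.
apply: (le_lt_trans (lerD (cmodD _ _) (lexx _))); rewrite cmodN.
rewrite (_ : eta = eta / 3%:R + eta / 3%:R + eta / 3%:R); last first.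
  by rewrite -!mulrDl (_ : eta + eta + eta = eta * 3%:R) ?mulfK // ?pnatr_eq0 //; ring.
by apply: ltrD => //; apply: ltrD.
Qed.

End PfBE.
Arguments BE_small {R d G f}.
Section Sep.
Variable R : realType.

Lemma sum_const_seq (T : Type) (s : seq T) (c : R) : \sum_(x <- s) c = (size s)%:R * c.
Proof.
elim: s => [|x s IH]; first by rewrite big_nil mul0r.
by rewrite big_cons IH /= mulrSr mulrDl mul1r addrC.
Qed.

Lemma small_inv (e : R) : 0 < e -> exists m : nat, 1 / m.+1%:R < e.
Proof.
move=> he; have h0 : 0 <= 1 / e by rewrite divr_ge0 // ltW.
have hb := archi_boundP h0; exists (Num.bound (1 / e)).
set b := Num.bound _ in hb *.
have hb0 : (0 : R) < b.+1%:R by rewrite ltr0n.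
rewrite ltr_pdivrMr // mulrC -ltr_pdivrMr // (lt_trans hb) //.
by rewrite ltr_nat.
Qed.

Lemma sum_fsetU {T : choiceType} (F E : {fset T}) (g : T -> R) :
  \sum_(x <- (F `|` E)%fset) g x = \sum_(x <- F) g x + \sum_(x <- E | x \notin F) g x.
Proof.
rewrite (big_fsetID _ (mem F)) /=; congr (_ + _).
  by apply: eq_fbigl => x; rewrite !inE /=; case: (x \in F); rewrite ?andbF ?orbT.
rewrite [RHS]big_fset_condE; apply: eq_fbigl => x; rewrite !inE /=.
by case: (x \in F); rewrite /= ?andbT ?andbF...
Qed.

Lemma tail_small {T : choiceType} (y : T -> R[i]) : in_l1 y ->
  forall del : R, 0 < del -> exists F : {fset T},
    forall E : {fset T}, \sum_(x <- E | x \notin F) cmod (y x) <= del.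
Proof.
move=> [M hM] del hd; apply: contrapT => hn.
have H : forall F : {fset T}, exists E : {fset T}, del < \sum_(x <- E | x \notin F) cmod (y x).
  move=> F; apply: contrapT => h; apply: hn; exists F => E.
  by rewrite leNgt; apply/negP => hl; apply: h; exists E.
have hk : forall k : nat, exists F : {fset T}, k%:R * del <= \sum_(x <- F) cmod (y x).
  elim=> [|k [F hF]].
    by exists fset0%fset; rewrite mul0r; apply: sumr_ge0 => x _; apply: cmod_ge0.
  have [E hE] := H F; exists (F `|` E)%fset; rewrite sum_fsetU mulrSr mulrDl mul1r.
  by apply: lerD => //; apply: ltW.
have h0 : 0 <= `|M| / del by rewrite divr_ge0 // ltW.
have [F hF] := hk (Num.bound (`|M| / del)).
have := archi_boundP h0; rewrite ltr_pdivrMr // => hb.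
have := hM F; have := ler_norm M; lra.
Qed.

Lemma map_eq_mem (T U : eqType) (g1 g2 : T -> U) (s : seq T) x :
  map g1 s = map g2 s -> x \in s -> g1 x = g2 x.
Proof.
elim: s => [|a s IH] //= [e1 e2]; rewrite inE => /orP [/eqP ->|xs] //.
exact: IH.
Qed.

Definition tail_ok {T : choiceType} (z : T -> R[i]) (K : {fset T}) (m : nat) :=
  forall E : {fset T}, \sum_(x <- E | x \notin K) cmod (z x) <= 1 / m.+1%:R.

Definition codeK {T : choiceType} (z : T -> R[i]) (K : {fset T}) (m : nat) :=
  [seq qz m (z x) | x <- enum_fset K].

Lemma sep_of_countable (T : choiceType) (Y : set (T -> R[i])) :
  l1_subspace Y -> countable [set x | exists y, Y y /\ y x != 0] -> l1_separable Y.
Proof.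
move=> [hl1 h0 hadd hmul] cS.
set S := [set x | exists y, Y y /\ y x != 0] in cS.
pose KT := (nat * nat * seq (int * int))%type.
pose C (k : KT * set T) : set (T -> R[i]) :=
  [set z | Y z /\ tail_ok z (fset_set k.2) k.1.1.1 /\ codeK z (fset_set k.2) k.1.1.2 = k.1.2].
pose pick (k : KT * set T) : T -> R[i] :=
  match pselect (exists z, C k z) with
  | left h => proj1_sig (cid h)
  | right _ => fun _ => 0
  end.
have pickY : forall k, Y (pick k).
  move=> k; rewrite /pick; case: pselect => [h|_] //.
  by case: (cid h) => z [].
have pickC : forall k, (exists z, C k z) -> C k (pick k).
  move=> k hk; rewrite /pick; case: pselect => [h|//].
  by case: (cid h).
pose KS := [set: KT] `*` [set A : set T | A `<=` S /\ finite_set A].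
have cKS : countable KS.
  apply: countableX; first exact: countableP.
  exact: countable_finite_subset.
exists (pick @` KS); split.
- exact: card_le_trans (card_image_le _ _) cKS.
- by move=> _ [k _ <-].
move=> y Yy eps he.
have he4 : 0 < eps / 4%:R by rewrite divr_gt0 // ltr0n.
have [m1 hm1] := small_inv _ he4.
have hd1 : 0 < 1 / (m1.+1%:R : R) by rewrite divr_gt0 // ltr0n.
have [F hF] := tail_small y (hl1 _ Yy) _ hd1.
pose A := [set x | x \in F /\ y x != 0].
have fA : finite_set A.
  apply: (sub_finite_set (B := [set` F])); last exact: finite_fset.
  by move=> x [].
have AS : A `<=` S by move=> x [_ yx]; exists y.
pose K := fset_set A.
have inK : forall x, (x \in K) = (x \in F) && (y x != 0).
  move=> x; rewrite /K in_fset_set //; apply/idP/idP.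
    by rewrite inE => -[-> ->].
  by move=> /andP [a b]; rewrite inE.
have he8 : 0 < eps / (8 * (#|` K|.+1)%:R).
  by rewrite divr_gt0 // mulr_gt0 // ltr0n.
have [m2 hm2] := small_inv _ he8.
pose k : KT * set T := (m1, m2, codeK y K m2, A).
have Cy : C k y.
  split=> //; split=> // E.
  apply: le_trans (hF E); rewrite big_mkcond [X in _ <= X]big_mkcond /=.
  apply: ler_sum => x _; rewrite inK negb_and negbK.
  by case xF: (x \in F) => //=; case: eqP => [->|]; rewrite ?cmod0.

have Cz := pickC k (ex_intro _ y Cy).
set z := pick k in Cz.
exists z; first by exists k.
case: Cz => _ [tz cz].
exists ((#|` K|)%:R * (2 / m2.+1%:R) + 2 / m1.+1%:R).
  have hK : 0 <= (#|` K|)%:R :> R by apply: ler0n.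
  have h1 : (m2.+1%:R : R)^-1 * (8 * ((#|` K|)%:R + 1)) < eps.
    by rewrite natr1 -div1r -ltr_pdivlMr // mulr_gt0 // ltr0n.
  rewrite !div1r in hm1.
  set a := (m2.+1%:R : R)^-1 in h1 *; set b := (m1.+1%:R : R)^-1 in hm1 *.
  have ha : 0 <= a by rewrite invr_ge0 ler0n.
  set n := (#|` K|)%:R : R in hK h1 *.
  have : 0 <= n * a by rewrite mulr_ge0.
  lra.
move=> E.
rewrite (bigID (fun x => x \in K)) /=.
apply: lerD.
  apply: (@le_trans _ _ (\sum_(x <- K) cmod (y x - z x))).
    rewrite (@eq_fbigl_cond _ _ _ _ E K (fun x => x \in K) (fun x => x \in E)); last first.
      by move=> x; rewrite !inE /= andbC.
    rewrite [X in _ <= X](bigID (fun x => x \in E)) /= lerDl.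
    by apply: sumr_ge0 => x _; apply: cmod_ge0.
  rewrite -sum_const_seq big_seq [X in _ <= X]big_seq.
  apply: ler_sum => x xK.
  have e := @map_eq_mem _ _ _ _ _ _ cz xK.
  by apply: qz_close; rewrite -e.
apply: (@le_trans _ _ (\sum_(x <- E | x \notin K) (cmod (y x) + cmod (z x)))).
  by apply: ler_sum => x _; apply: cmodBB.
rewrite big_split /= (_ : 2 / m1.+1%:R = 1 / m1.+1%:R + 1 / m1.+1%:R); last by rewrite -mulrDl.
apply: lerD; last exact: tz.
apply: le_trans (hF E); rewrite big_mkcond [X in _ <= X]big_mkcond /=.
apply: ler_sum => x _; rewrite inK negb_and negbK.
by case xF: (x \in F) => //=; case: eqP => [->|]; rewrite ?cmod0.
Qed.

End Sep.
Arguments sum_const_seq {R T}. Arguments small_inv {R}. Arguments sum_fsetU {R T}.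
Arguments tail_small {R T}. Arguments sep_of_countable {R T}.
Section Helpers.
Variables (R : realType) (d : Order.disp_t) (G : orderType d).

Lemma sum_supp (E S : {fset G}) (L : seq G) (x0 : G) (h : G -> R[i]) :
  (S `<=` E)%fset -> perm_eq (enum_fset S) L -> (forall x, x \notin S -> h x = 0) ->
  \sum_(x <- E) h x = \sum_(u < size L) h (nth x0 L u).
Proof.
move=> SE pSL h0.
rewrite -(@big_fset_incl _ _ _ _ S E h SE); last by move=> x _ /h0.
by rewrite (perm_big _ pSL) (big_nth x0) big_mkord.
Qed.

Definition Lst (x0 : G) (r t : {fset G}) : seq G := enum_fset r ++ sort <=%O (enum_fset t).

Lemma perm_Lst x0 (r t : {fset G}) : (forall x, x \in t -> x \notin r) ->
  perm_eq (enum_fset (r `|` t)%fset) (Lst x0 r t).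
Proof.
move=> dis; apply: uniq_perm; first exact: fset_uniq.
  rewrite cat_uniq fset_uniq sort_uniq fset_uniq /= andbT.
  apply/hasPn => x; rewrite mem_sort => /dis.
  done.
by move=> x; rewrite mem_cat mem_sort in_fsetU.
Qed.

Lemma size_Lst x0 r t : size (Lst x0 r t) = (#|` r| + #|` t|)%N.
Proof. by rewrite size_cat size_sort. Qed.

Lemma nth_Lst x0 r t u : nth x0 (Lst x0 r t) u =
  if (u < #|` r|)%N then nth x0 (enum_fset r) u else ith x0 t (u - #|` r|).
Proof. by rewrite nth_cat. Qed.

Lemma sum_pick (m : nat) (K : 'I_m) (c : R[i]) :
  \sum_(u < m) \sum_(v < m) (if (u == K) && (v == K) then c else 0) = c.
Proof.
rewrite (bigD1 K) //= [X in _ + X]big1 ?addr0; last first.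
  by move=> u uK; apply: big1 => v _; rewrite (negbTE uK).
rewrite (bigD1 K) //= eqxx [X in _ + X]big1 ?addr0 //.
by move=> v vK; rewrite (negbTE vK) andbF.
Qed.

Lemma sum_const_ord (m : nat) (c : R) : \sum_(u < m) c = m%:R * c.
Proof. by rewrite sumr_const card_ord mulr_natl. Qed.

End Helpers.
Arguments sum_supp {R d G}. Arguments Lst {d G}. Arguments perm_Lst {d G}.
Arguments size_Lst {d G}. Arguments nth_Lst {d G}. Arguments sum_pick {R}.
Arguments sum_const_ord {R}.
Section WEst.
Variables (R : realType) (d : Order.disp_t) (G : orderType d) (f : G -> G -> bool).

Definition ind (x y : G) := (x != y) && f x y.

Definition Wsum m (La Lb : nat -> G) (ya yb : G -> R[i]) : R[i] :=
  \sum_(u < m) \sum_(v < m) (if ind (La u) (Lb v) then ya (La u) * yb (Lb v) else 0).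

Lemma prod_close (a b a' b' : R[i]) (Mr e1 : R) :
  cmod (a - a') <= e1 -> cmod (b - b') <= e1 -> cmod a' <= Mr -> cmod b <= Mr ->
  cmod (a * b - a' * b') <= 2 * Mr * e1.
Proof.
move=> h1 h2 h3 h4.
have -> : a * b - a' * b' = (a - a') * b + a' * (b - b') by ring.
apply: (le_trans (cmodD _ _)); rewrite !cmodM.
have e0 : 0 <= e1 by apply: le_trans h1; apply: cmod_ge0.
have := ler_pM (cmod_ge0 _) (cmod_ge0 _) h1 h4.
have := ler_pM (cmod_ge0 _) (cmod_ge0 _) h3 h2.
lra.
Qed.

Lemma W_est m (K : 'I_m) (La Lb La' Lb' : nat -> G) (ya yb ya' yb' : G -> R[i]) (Mr e1 : R) :
  (forall u v : 'I_m, (u != K) || (v != K) -> ind (La u) (Lb v) = ind (La' u) (Lb' v)) ->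
  ind (La K) (Lb K) -> ~~ ind (La' K) (Lb' K) ->
  ya (La K) = 1 -> yb (Lb K) = 1 ->
  (forall u : 'I_m, cmod (ya (La u) - ya' (La' u)) <= e1) ->
  (forall v : 'I_m, cmod (yb (Lb v) - yb' (Lb' v)) <= e1) ->
  (forall u : 'I_m, cmod (ya' (La' u)) <= Mr) ->
  (forall v : 'I_m, cmod (yb (Lb v)) <= Mr) ->
  cmod (Wsum m La Lb ya yb - Wsum m La' Lb' ya' yb' - 1) <= m%:R * m%:R * (2 * Mr * e1).
Proof.
move=> hind hK hK' ya1 yb1 hca hcb hMa hMb.
have e0 : 0 <= e1 by apply: le_trans (hca K); apply: cmod_ge0.
have M0 : 0 <= Mr by apply: le_trans (hMb K); apply: cmod_ge0.
have c0 : 0 <= 2 * Mr * e1 by rewrite !mulr_ge0.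
rewrite -(sum_pick _ K 1) /Wsum -!sumrB.
rewrite -mulrA -sum_const_ord.
apply: (le_trans (cmod_sum _ _ _ _)); apply: ler_sum => u _.
rewrite -!sumrB -sum_const_ord.
apply: (le_trans (cmod_sum _ _ _ _)); apply: ler_sum => v _.
have [uK|uK] := eqVneq u K; have [vK|vK] := eqVneq v K.
- by rewrite uK vK /= hK (negbTE hK') ya1 yb1 mulr1 subr0 subrr cmod0.
- rewrite -hind; last by rewrite vK orbT.
  rewrite /= subr0; case: ifP => _; last by rewrite subrr cmod0.
  by apply: prod_close.
- rewrite -hind; last by rewrite uK.
  rewrite /= subr0; case: ifP => _; last by rewrite subrr cmod0.
  by apply: prod_close.
- rewrite -hind; last by rewrite uK.
  rewrite /= subr0; case: ifP => _; last by rewrite subrr cmod0.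
  by apply: prod_close.
Qed.

End WEst.
Arguments ind {d G}. Arguments Wsum {R d G}. Arguments W_est {R d G f m}.
Lemma arith5 (R : realType) (x1 x2 x3 x4 x5 t : R) : 1 <= x1 + x2 + x3 + x4 + x5 ->
  x1 < 1 / 8%:R -> x2 < 1 / 8%:R -> x3 <= 1 / 8%:R -> x4 <= 1 / 8%:R -> x5 <= t -> t <= 1 / 4%:R -> False.
Proof. lra. Qed.

Section Main.
Variables (R : realType) (d : Order.disp_t) (G : orderType d) (f : G -> G -> bool).
Hypothesis fsym : symmetric_colouring f.
Hypothesis hf : partition_first_kind f.
Variable Y : set (G -> R[i]).
Hypothesis hY : l1_subspace Y.
Hypothesis hYP : forall y, Y y -> Pf_eq f y 0.

Lemma S_countable : countable [set x | exists y, Y y /\ y x != 0].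
Proof.
case: hY => hl1 h0 hadd hmul.
apply: contrapT => nS.
set S := [set x | _] in nS.
pose P1 (M : nat) (g : G) := exists y : G -> R[i],
  [/\ Y y, y g = 1 & forall F : {fset G}, \sum_(x <- F) cmod (y x) <= M%:R].
have hex1 : forall g, S g -> exists M, P1 M g.
  move=> g [y [Yy yg]].
  have Yy' := hmul (y g)^-1 y Yy.
  have [M0 hM0] := hl1 _ Yy'.
  exists (Num.bound `|M0|), (fun x => (y g)^-1 * y x); split => //.
    by rewrite mulVf.
  move=> F; apply: le_trans (hM0 F) _; apply: le_trans (ler_norm _) _.
  by apply: ltW; apply: archi_boundP.
have [M nS1] := pigeon nat S P1 nS hex1.
set S1 := S `&` P1 M in nS1.
pose Mr : R := M.+1%:R.
have Mr0 : 0 < Mr by rewrite ltr0n.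
have MMr : (M%:R : R) <= Mr by rewrite ler_nat.
have [yf hyf] := boolp.choice (P := fun g y => S1 g -> [/\ Y y, y g = 1 &
   forall F : {fset G}, \sum_(x <- F) cmod (y x) <= M%:R]) (fun g =>
   match pselect (S1 g) with
   | left h => match h.2 with ex_intro y hy => ex_intro _ y (fun _ => hy) end
   | right h => ex_intro _ (fun _ => 0) (fun h' => False_ind _ (h h'))
   end).
pose del : R := 1 / (16%:R * Mr).
have hdel : 0 < del by rewrite divr_gt0 // mulr_gt0 // ltr0n.
have hFex : forall g, exists F : {fset G}, S1 g -> g \in F /\
    forall E : {fset G}, \sum_(x <- E | x \notin F) cmod (yf g x) <= del.
  move=> g; case: (pselect (S1 g)) => [Sg|ng]; last by exists fset0%fset.
  have [Yg _ _] := hyf g Sg.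
  have [F hF] := tail_small (yf g) (hl1 _ Yg) _ hdel.
  exists (g |` F)%fset => _; split; first by rewrite in_fset1U eqxx.
  move=> E; apply: le_trans (hF E); rewrite big_mkcond [X in _ <= X]big_mkcond /=.
  apply: ler_sum => x _; rewrite in_fset1U negb_or.
  by case: (x \in F); case: (x == g); rewrite /= ?cmod_ge0.
have [Ff hFf] := boolp.choice hFex.
pose P3 (N : nat) (g : G) := #|` Ff g| = N.
have [N nD2] := pigeon nat S1 P3 nS1 (fun g _ => ex_intro _ _ erefl).
set D2 := S1 `&` P3 N in nD2.
have [J [r [JD nJ hJ]]] := delta_system _ N Ff D2 nD2 (fun g h => h.2).
pose J1 := J `\` [set` r].
have nJ1 : ~ countable J1 by apply: uncount_setD nJ (countable_fset r).
pose tg g := (Ff g `\` r)%fset.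
have J1S : forall g, J1 g -> S1 g by move=> g [/JD []].
have J1r : forall g, J1 g -> g \notin r by move=> g [_ /negP].
have gtg : forall g, J1 g -> g \in tg g.
  move=> g Jg; rewrite in_fsetD J1r //=.
  by have [] := hFf g (J1S g Jg).
have tgnr : forall g x, x \in tg g -> x \notin r by move=> g x; rewrite in_fsetD => /andP [].
have tgdis : forall g h, J1 g -> J1 h -> g <> h -> (tg g `&` tg h)%fset = fset0%fset.
  move=> g h Jg Jh gh; apply/fsetP => x; rewrite in_fset0 !in_fsetI !in_fsetD.
  apply/negP => /andP [/andP [xr xg] /andP [_ xh]].
  by move: xr; rewrite -(hJ g h Jg.1 Jh.1 gh) in_fsetI xg xh.
have Fsub : forall g x, x \in Ff g -> x \in (r `|` tg g)%fset.
  by move=> g x xF; rewrite in_fsetU in_fsetD xF andbT; case: (x \in r).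
pose P6 (n : nat) (g : G) := #|` tg g| = n.
have [n nJ2] := pigeon nat J1 P6 nJ1 (fun g _ => ex_intro _ _ erefl).
set J2 := J1 `&` P6 n in nJ2.
have [x0 _] := uncount_ex nJ2.
pose P7 (k : nat) (g : G) := (k < n)%N /\ ith x0 (tg g) k = g.
have hex7 : forall g, J2 g -> exists k, P7 k g.
  move=> g [Jg e6]; have [k hk ek] := ith_ex x0 (tg g) g (gtg g Jg).
  by exists k; split => //; rewrite -e6.
have [k nJ3] := pigeon nat J2 P7 nJ2 hex7.
set J3 := J2 `&` P7 k in nJ3.
pose nr := #|` r|.
pose pat g := [seq [seq f (nth x0 (enum_fset r) i) (ith x0 (tg g) p) | i <- iota 0 nr] | p <- iota 0 n].
pose P8 (P : seq (seq bool)) (g : G) := pat g = P.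
have [P0 nJ4] := pigeon _ J3 P8 nJ3 (fun g _ => ex_intro _ _ erefl).
set J4 := J3 `&` P8 P0 in nJ4.
pose m := (nr + n)%N.
pose e : R := (16%:R * Mr * (m * m)%:R + 1)^-1.
have he : 0 < e by rewrite invr_gt0 ltr_pwDr // mulr_ge0 // mulr_ge0 // ?ler0n // ltW.
have [m' hm'] := small_inv e he.
pose Lg g := Lst x0 r (tg g).
pose gc g := [seq qz m' (yf g x) | x <- Lg g].
pose P9 (c : seq (int * int)) (g : G) := gc g = c.
have [c0 nJ5] := pigeon _ J4 P9 nJ4 (fun g _ => ex_intro _ _ erefl).
set J5 := J4 `&` P9 c0 in nJ5.
have hJ5 : forall g, J5 g -> [/\ J1 g, #|` tg g| = n, ith x0 (tg g) k = g, pat g = P0 & gc g = c0].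
  by move=> g [[[[J1g e6] [_ e7]] e8] e9].
have hkn : (k < n)%N by have [g [[[_ [h _]] _] _]] := uncount_ex nJ5.
pose A := [set tg g | g in J5].
have injtg : {in J5 &, injective tg}.
  move=> g h /set_mem Jg /set_mem Jh egh; apply: contrapT => gh.
  have [J1g _ _ _ _] := hJ5 g Jg; have [J1h _ _ _ _] := hJ5 h Jh.
  have := tgdis g h J1g J1h gh; rewrite -egh fsetIid => e0.
  by have := gtg g J1g; rewrite e0 in_fset0.
have nA : ~ countable A by rewrite /A (eq_countable (inj_card_eq injtg)).
have hsz : forall a, A a -> #|` a| = n by move=> _ [g Jg <-]; have [] := hJ5 g Jg.
have hdis : forall a b, A a -> A b -> a <> b -> (a `&` b)%fset = fset0%fset.
  move=> _ _ [g Jg <-] [h Jh <-] ab; have [J1g _ _ _ _] := hJ5 g Jg.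
  have [J1h _ _ _ _] := hJ5 h Jh.
  by apply: tgdis => // gh; apply: ab; rewrite gh.
have [a [b [a' [b' [Aa Ab Aa' Ab' [ab ab' fab fab' hij]]]]]] := hf x0 n A k nA hsz hdis hkn.
case: Aa => al Jal eal; case: Ab => be Jbe ebe.
case: Aa' => al' Jal' eal'; case: Ab' => be' Jbe' ebe'.
subst a b a' b'.
pose fin g x := if x \in (r `|` tg g)%fset then yf g x else 0.
have F1 : forall g, J5 g -> forall E : {fset G}, \sum_(x <- E) cmod (yf g x) <= Mr.
  move=> g Jg E; have [J1g _ _ _ _] := hJ5 g Jg; have [_ _ hb] := hyf g (J1S g J1g).
  exact: le_trans (hb E) MMr.
have F2 : forall g, J5 g -> forall E : {fset G}, \sum_(x <- E) cmod (fin g x) <= Mr.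
  move=> g Jg E; apply: le_trans (F1 g Jg E); apply: ler_sum => x _.
  by rewrite /fin; case: ifP; rewrite ?cmod0 ?cmod_ge0.
have F3 : forall g, J5 g -> forall E : {fset G}, \sum_(x <- E) cmod (yf g x - fin g x) <= del.
  move=> g Jg E; have [J1g _ _ _ _] := hJ5 g Jg; have [_ ht] := hFf g (J1S g J1g).
  apply: le_trans (ht E); rewrite [X in _ <= X]big_mkcond /=; apply: ler_sum => x _.
  rewrite /fin; case: ifP => hx; first by rewrite subrr cmod0; case: ifP; rewrite ?cmod_ge0.
  have -> : x \notin Ff g by apply/negP => /Fsub; rewrite hx.
  by rewrite subr0.
have F4 : forall g, J5 g -> forall x, cmod (yf g x) <= Mr.
  by move=> g Jg x; have := F1 g Jg [fset x]%fset; rewrite big_seq_fset1.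
have BEap : forall g h, J5 g -> J5 h -> forall E : {fset G},
    cmod (BE f E (yf g) (yf h) - BE f E (fin g) (fin h)) <= 2%:R * Mr * del.
  move=> g h Jg Jh E; rewrite BE_diff.
  apply: le_trans (cmodD _ _) _.
  apply: le_trans (lerD (BE_le _ _ _ _) (BE_le _ _ _ _)) _.
  have := ler_pM (sum_ge0 _ _ _ _) (sum_ge0 _ _ _ _) (F3 g Jg E) (F1 h Jh E).
  have := ler_pM (sum_ge0 _ _ _ _) (sum_ge0 _ _ _ _) (F2 g Jg E) (F3 h Jh E).
  lra.
have szL : forall g, J5 g -> size (Lg g) = m.
  by move=> g Jg; have [_ ng _ _ _] := hJ5 g Jg; rewrite /Lg size_Lst ng.
have memL : forall g, J5 g -> forall u, (u < m)%N -> nth x0 (Lg g) u \in (r `|` tg g)%fset.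
  move=> g Jg u hu.
  have := perm_mem (perm_Lst x0 r (tg g) (tgnr g)) (nth x0 (Lg g) u).
  by rewrite mem_nth ?szL // => ->.
have WE : forall g h, J5 g -> J5 h -> forall E : {fset G},
    ((r `|` tg g) `|` tg h `<=` E)%fset ->
    BE f E (fin g) (fin h) = Wsum f m (nth x0 (Lg g)) (nth x0 (Lg h)) (yf g) (yf h).
  move=> g h Jg Jh E hE.
  have sg : (r `|` tg g `<=` E)%fset := fsubset_trans (fsubsetUl _ _) hE.
  have sh : (r `|` tg h `<=` E)%fset.
    apply: fsubset_trans hE; apply/fsubsetP => x; rewrite !in_fsetU.
    by case/orP => ->; rewrite ?orbT.
  rewrite /BE (sum_supp E _ (Lg g) x0 _ sg (perm_Lst x0 r (tg g) (tgnr g))); last first.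
    move=> x hx; apply: big1 => j _; rewrite /fin (negbTE hx).
    by case: ifP => _ //; rewrite mul0r.
  rewrite szL //; apply: eq_bigr => u _.
  rewrite (sum_supp E _ (Lg h) x0 _ sh (perm_Lst x0 r (tg h) (tgnr h))); last first.
    move=> x hx; rewrite /fin (negbTE hx).
    by case: ifP => _ //; rewrite mulr0.
  rewrite szL //; apply: eq_bigr => v _.
  by rewrite /fin (memL g Jg u (ltn_ord u)) (memL h Jh v (ltn_ord v)).
have nthL : forall g u, nth x0 (Lg g) u =
    if (u < nr)%N then nth x0 (enum_fset r) u else ith x0 (tg g) (u - nr).
  by move=> g u; rewrite /Lg nth_Lst.
have pat_nth : forall g, J5 g -> forall p i, (p < n)%N -> (i < nr)%N ->
    f (nth x0 (enum_fset r) i) (ith x0 (tg g) p) = nth false (nth [::] P0 p) i.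
  move=> g Jg p i hp hi; have [_ _ _ <- _] := hJ5 g Jg.
  by rewrite /pat (nth_map 0%N) ?size_iota // nth_iota // (nth_map 0%N) ?size_iota // nth_iota.
have indeq : forall x y x' y', x != y -> x' != y' -> f x y = f x' y' ->
    ind f x y = ind f x' y'.
  by move=> x y x' y' h1 h2 h3; rewrite /ind h1 h2 h3.
have rmem : forall i, (i < nr)%N -> nth x0 (enum_fset r) i \in r.
  by move=> i hi; apply: mem_nth.
have tmem : forall g, J5 g -> forall p, (p < n)%N -> ith x0 (tg g) p \in tg g.
  by move=> g Jg p hp; have [_ ng _ _ _] := hJ5 g Jg; apply: ith_mem; rewrite ng.
have rt_neq : forall g, J5 g -> forall i p, (i < nr)%N -> (p < n)%N ->
    nth x0 (enum_fset r) i != ith x0 (tg g) p.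
  move=> g Jg i p hi hp; apply/eqP => e1.
  by have := tgnr g _ (tmem g Jg p hp); rewrite -e1 rmem.
have tt_neq : forall g h, J5 g -> J5 h -> g <> h -> forall p q, (p < n)%N -> (q < n)%N ->
    ith x0 (tg g) p != ith x0 (tg h) q.
  move=> g h Jg Jh gh p q hp hq; apply/eqP => e1.
  have [J1g _ _ _ _] := hJ5 g Jg; have [J1h _ _ _ _] := hJ5 h Jh.
  move: (tgdis g h J1g J1h gh) => /fsetP /(_ (ith x0 (tg g) p)).
  by rewrite in_fsetI in_fset0 tmem // e1 tmem.
have alb : al <> be by move=> e1; apply: ab; rewrite e1.
have alb' : al' <> be' by move=> e1; apply: ab'; rewrite e1.
have Kl : (nr + k < m)%N by rewrite /m ltn_add2l.
pose K : 'I_m := Ordinal Kl.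
have hind : forall u v : 'I_m, (u != K) || (v != K) ->
    ind f (nth x0 (Lg al) u) (nth x0 (Lg be) v) = ind f (nth x0 (Lg al') u) (nth x0 (Lg be') v).
  move=> u v huv; have hu := ltn_ord u; have hv := ltn_ord v.
  have huv' : (val u != (nr + k)%N) || (val v != (nr + k)%N) by [].
  rewrite !nthL.
  case: (ltnP u nr) => hur; case: (ltnP v nr) => hvr.
  - by [].
  - have hq : (v - nr < n)%N by rewrite ltn_subLR.
    apply: indeq; [exact: rt_neq | exact: rt_neq |].
    by rewrite (pat_nth be) // (pat_nth be').
  - have hp : (u - nr < n)%N by rewrite ltn_subLR.
    apply: indeq; [by rewrite eq_sym rt_neq | by rewrite eq_sym rt_neq |].
    by rewrite [LHS]fsym [RHS]fsym (pat_nth al) // (pat_nth al').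
  - have hp : (u - nr < n)%N by rewrite ltn_subLR.
    have hq : (v - nr < n)%N by rewrite ltn_subLR.
    apply: indeq; [exact: tt_neq | exact: tt_neq |].
    apply: hij => // -[e1 e2]; move: huv'.
    have eu : val u = (nr + k)%N by rewrite -e1 subnKC.
    have ev : val v = (nr + k)%N by rewrite -e2 subnKC.
    by rewrite eu ev !eqxx.
have LK : forall g, J5 g -> nth x0 (Lg g) K = g.
  move=> g Jg; rewrite nthL /= ltnNge leq_addr /= addKn.
  by have [_ _ -> _ _] := hJ5 g Jg.
have [J1al _ ial _ gal] := hJ5 al Jal; have [J1be _ ibe _ gbe] := hJ5 be Jbe.
have [J1al' _ ial' _ gal'] := hJ5 al' Jal'; have [J1be' _ ibe' _ gbe'] := hJ5 be' Jbe'.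
rewrite ial ibe in fab; rewrite ial' ibe' in fab'.
have hK : ind f (nth x0 (Lg al) K) (nth x0 (Lg be) K).
  by rewrite !LK // /ind fab andbT; apply/eqP.
have hK' : ~~ ind f (nth x0 (Lg al') K) (nth x0 (Lg be') K).
  by rewrite !LK // /ind fab' andbF.
have [Yal al1 _] := hyf al (J1S al J1al); have [Ybe be1 _] := hyf be (J1S be J1be).
have [Yal' _ _] := hyf al' (J1S al' J1al'); have [Ybe' _ _] := hyf be' (J1S be' J1be').
have ya1 : yf al (nth x0 (Lg al) K) = 1 by rewrite LK.
have yb1 : yf be (nth x0 (Lg be) K) = 1 by rewrite LK.
have close : forall g h, J5 g -> J5 h -> forall u : 'I_m,
    cmod (yf g (nth x0 (Lg g) u) - yf h (nth x0 (Lg h) u)) <= 2 / m'.+1%:R.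
  move=> g h Jg Jh u; apply: qz_close.
  have [_ _ _ _ eg] := hJ5 g Jg; have [_ _ _ _ eh] := hJ5 h Jh.
  have := congr1 (fun s => nth (0%Z, 0%Z) s u) (etrans eg (esym eh)).
  by rewrite /= /gc !(nth_map x0) ?szL.
have West := W_est K (nth x0 (Lg al)) (nth x0 (Lg be)) (nth x0 (Lg al')) (nth x0 (Lg be'))
  (yf al) (yf be) (yf al') (yf be') Mr (2 / m'.+1%:R) hind hK hK' ya1 yb1
  (close al al' Jal Jal') (close be be' Jbe Jbe') (fun u => F4 al' Jal' _) (fun v => F4 be Jbe _).
have h8 : (0 : R) < 1 / 8%:R by rewrite divr_gt0 // ltr0n.
have [E1 hE1] := BE_small fsym (yf al) (yf be) (hYP _ Yal) (hYP _ Ybe) (hYP _ (hadd _ _ Yal Ybe)) _ h8.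
have [E2 hE2] := BE_small fsym (yf al') (yf be') (hYP _ Yal') (hYP _ Ybe') (hYP _ (hadd _ _ Yal' Ybe')) _ h8.
pose E := ((E1 `|` E2) `|` ((r `|` tg al `|` tg be) `|` (r `|` tg al' `|` tg be')))%fset.
have c1 := hE1 E (fsubset_trans (fsubsetUl _ _) (fsubsetUl _ _)).
have c2 := hE2 E (fsubset_trans (fsubsetUr _ _) (fsubsetUl _ _)).
have c3 := BEap al be Jal Jbe E.
rewrite (WE al be Jal Jbe E (fsubset_trans (fsubsetUl _ _) (fsubsetUr _ _))) in c3.
have c4 := BEap al' be' Jal' Jbe' E.
rewrite (WE al' be' Jal' Jbe' E (fsubset_trans (fsubsetUr _ _) (fsubsetUr _ _))) in c4.
set Wab := Wsum f m _ _ (yf al) (yf be) in c3 West.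
set Wab' := Wsum f m _ _ (yf al') (yf be') in c4 West.
set Bab := BE f E (yf al) (yf be) in c1 c3.
set Bab' := BE f E (yf al') (yf be') in c2 c4.
have key : (1 : R[i]) = Bab - Bab' - (Bab - Wab) + (Bab' - Wab') - (Wab - Wab' - 1) by ring.
have tri : cmod (1 : R[i]) <= cmod Bab + cmod Bab' + cmod (Bab - Wab) + cmod (Bab' - Wab')
    + cmod (Wab - Wab' - 1).
  rewrite {1}key.
  apply: le_trans (cmodD _ _) _; rewrite cmodN lerD2r.
  apply: le_trans (cmodD _ _) _; rewrite lerD2r.
  apply: le_trans (cmodD _ _) _; rewrite cmodN lerD2r.
  by apply: le_trans (cmodD _ _) _; rewrite cmodN.
rewrite cmod1 in tri.
have hd : 2%:R * Mr * del = 1 / 8%:R.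
  by rewrite /del; field; rewrite addrC natr1 pnatr_eq0.
rewrite hd in c3 c4.
have hW : (m%:R * m%:R * (2 * Mr * (2 / m'.+1%:R)) : R) <= 1 / 4%:R.
  have hm'' : 1 / (m'.+1%:R : R) * (16%:R * Mr * (m * m)%:R + 1) < 1.
    rewrite -ltr_pdivlMr; last by rewrite ltr_pwDr // !mulr_ge0 // ?ler0n // ltW.
    by move: hm'; rewrite /e !div1r.
  rewrite natrM in hm''.
  set a := 1 / (m'.+1%:R : R) in hm'' *.
  have -> : 2 / (m'.+1%:R : R) = 2 * a by rewrite /a mulrA mulr1.
  set q := (m%:R : R) in hm'' *.
  have ha : 0 <= a by rewrite /a divr_ge0 // ler0n.
  have hq : 0 <= q by rewrite /q ler0n.
  have : 0 <= a * (Mr * (q * q)).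
    by apply: mulr_ge0 => //; apply: mulr_ge0; [exact: ltW | exact: mulr_ge0].
  lra.
exact: (@arith5 R _ _ _ _ _ _ tri c1 c2 c3 c4 West hW).
Qed.

End Main.

Theorem mainTheorem4 (R : realType) (d : Order.disp_t) (G : orderType d)
  (wfG : well_founded (fun x y : G => (x < y)%O))
  (f : G -> G -> bool) (fsym : symmetric_colouring f)
  (hf : partition_first_kind f)
  (Y : set (G -> R[i])) (hY : l1_subspace Y)
  (hYP : forall y, Y y -> Pf_eq f y 0) :
  l1_separable Y.
Proof.
apply: (sep_of_countable Y hY).
exact: (@S_countable R d G f fsym hf Y hY hYP).
Qed.
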